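(* Let $N\ge1$, $K>0$, $r_i>0$, let $(\mu_{ij})$ be a nonnegative, symmetric, irreducible $N\times N$ matrix, and let $\alpha:\mathbb{R}^N\to\mathbb{R}$ be locally Lipschitz with $\alpha(0)=0$, monotone increasing for the componentwise order, and such that there exist positive $R,k,c$ with $c(\sum_jv_j)^k\le\alpha(v)$ for all $v\in[0,\infty)^N$ with $\sum_j|v_j|\ge R$. If $v\in[0,\infty)^N$ is a nonnegative stationary solution of $$\frac{dv_i}{dt}=v_i\left[r_i-\frac{1}{K}\alpha(v)\right]+\sum_{j=1}^N\mu_{ij}(v_j-v_i),\qquad i=1,\dots,N,$$ then either $v\equiv0$ or $v_i>0$ for all $i$.
   Context: A stationary solution is a vector at which the right-hand side vanishes for every $i$. *)

(* Defs.v *)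
From HB Require Import structures.
From mathcomp Require Import all_boot all_order all_algebra.
From mathcomp Require Import all_classical all_reals.
From mathcomp Require Import exp.
Set Implicit Arguments. Unset Strict Implicit. Unset Printing Implicit Defensive.
Import Order.TTheory GRing.Theory Num.Theory.
Local Open Scope ring_scope.

(* Irreducibility of a square matrix (combinatorial definition): there is no
   proper nonempty index set S that is "closed", i.e. every index set S with
   S <> empty, S <> all has some i in S, j not in S with mu i j <> 0.
   (Equivalently: mu is not permutation-similar to a block triangular matrix.) *)
Definition irreducible_mx (R : numDomainType) (N : nat) (mu : 'M[R]_N) : Prop :=
  forall S : {set 'I_N}, S != finset.set0 -> S != [set: 'I_N] ->
    exists i, exists j, [/\ i \in S, j \notin S & mu i j != 0].

Definition locally_lipschitz (R : realType) (N : nat) (f : ('I_N -> R) -> R) : Prop :=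
  forall x : 'I_N -> R, exists delta : R, exists L : R,
    0 < delta /\
    forall y z : 'I_N -> R,
      \sum_j `|y j - x j| < delta -> \sum_j `|z j - x j| < delta ->
      `|f y - f z| <= L * \sum_j `|y j - z j|.

Definition rhs (R : realType) (N : nat) (K : R) (r : 'I_N -> R) (mu : 'M[R]_N)
  (alpha : ('I_N -> R) -> R) (v : 'I_N -> R) (i : 'I_N) : R :=
  v i * (r i - alpha v / K) + \sum_j mu i j * (v j - v i).

Definition stationary (R : realType) (N : nat) (K : R) (r : 'I_N -> R) (mu : 'M[R]_N)
  (alpha : ('I_N -> R) -> R) (v : 'I_N -> R) : Prop :=
  forall i, rhs K r mu alpha v i = 0.

(* Main.v *)
Require Import Defs.
From HB Require Import structures.
From mathcomp Require Import all_boot all_order all_algebra.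
From mathcomp Require Import all_classical all_reals.
From mathcomp Require Import exp.
Import Order.TTheory GRing.Theory Num.Theory.
Local Open Scope ring_scope.

Theorem lemma4p2 (R : realType) (N : nat) (hN : (1 <= N)%N)
  (K : R) (r : 'I_N -> R) (mu : 'M[R]_N) (alpha : ('I_N -> R) -> R)
  (hK : 0 < K) (hr : forall i, 0 < r i)
  (hmu_nonneg : forall i j, 0 <= mu i j)
  (hmu_sym : mu^T = mu)
  (hmu_irr : irreducible_mx mu)
  (halpha_lip : locally_lipschitz alpha)
  (halpha0 : alpha (fun _ => 0) = 0)
  (halpha_mono : forall u w : 'I_N -> R, (forall j, u j <= w j) -> alpha u <= alpha w)
  (halpha_growth : exists Rb k c : R, [/\ 0 < Rb, 0 < k, 0 < c &
      forall u : 'I_N -> R, (forall j, 0 <= u j) -> Rb <= \sum_j `|u j| ->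
        c * (\sum_j u j) `^ k <= alpha u])
  (v : 'I_N -> R) (hv_nonneg : forall i, 0 <= v i)
  (hv_stat : stationary K r mu alpha v) :
  (forall i, v i = 0) \/ (forall i, 0 < v i).
Proof.
set S := [set i | v i == 0].
have [S0|S0] := eqVneq S finset.set0.
  right=> i; rewrite lt_neqAle hv_nonneg andbT eq_sym.
  apply/negP=> /eqP vi; have : i \in S by rewrite inE vi.
  by rewrite S0 inE.
have [ST|ST] := eqVneq S [set: 'I_N].
  left=> i; have : i \in S by rewrite ST inE.
  by rewrite inE => /eqP.
exfalso; have [i [j [iS jS mij]]] := hmu_irr S S0 ST.
move: iS jS; rewrite !inE => /eqP vi vj.
have h := hv_stat i; rewrite /rhs vi mul0r add0r in h.
have pos : 0 < mu i j * (v j - 0).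
  rewrite subr0 mulr_gt0 //; first by rewrite lt_neqAle eq_sym mij hmu_nonneg.
  by rewrite lt_neqAle eq_sym vj hv_nonneg.
have : 0 < \sum_k mu i k * (v k - 0).
  rewrite (bigD1 j) //=; apply: ltr_pwDl => //.
  by apply: sumr_ge0 => k _; rewrite subr0 mulr_ge0.
by rewrite h ltxx.
Qed.
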